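(* For every node $p$, if $p$ is active at time $t \geq t_p^e + 2D$, then $SysInfo^{[0, t-D]} \subseteq Changes_p^t$.
   Context: Model: asynchronous message passing; an adversary generates at most one Enter($p$), Leave($p$), Crash($p$) signal per node (forced leaves of crashed nodes may be generated at other active nodes and count toward churn). A node is present at $t$ if entered and not left; $N(t)$ is the number present, $N(t)\geq N_{min}$; $S_0$ is the set present at time 0; active = present and not crashed. A message broadcast by $p$ at time $t$ is received within $D$ time by every $q\neq p$ active throughout $[t,t+D]$ ($D$ unknown, no lower bound, FIFO). Churn: for some $\alpha<1$, at most $\alpha N(t)$ nodes enter or leave during any $[t,t+D]$. Failures: for some $\Delta<1$, at any $t$ at most $\Delta N(t)$ present nodes have crashed. Algorithm (CCReg, joining part): node $p$ keeps $Changes_p$ of $enter(q)$, $join(q)$, $leave(q)$ events (initially $\{enter(q),join(q): q\in S_0\}$ if $p\in S_0$, else empty); $Changes_p^t$ is its value at time $t$, and $Present_p=\{q: enter(q)\in Changes_p, leave(q)\notin Changes_p\}$. On Enter($p$) at time $t_p^e$ ($t_p^e=0$ for $p\in S_0$), $p$ adds $enter(p)$ and broadcasts enter; a receiver adds $enter(p)$ and broadcasts an enter-echo with its Changes set (and value, is_joined flag); receivers merge Changes sets from enter-echoes. After its first enter-echo from a joined node, $p$ sets $join\_bound:=\gamma|Present_p|$ and joins at time $t_p^j$ (adds $join(p)$, broadcasts joined) once it has received $join\_bound$ enter-echoes. Joined messages (sent at $t_q^j$) and leave messages (sent at $t_q^\ell$) cause receivers to add the event and broadcast an echo, whose receivers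 also add it. For a time interval $I$, $SysInfo^I = \{enter(q): t_q^e\in I\}\cup\{join(q): t_q^j\in I\}\cup\{leave(q): t_q^\ell\in I\}$. Assumptions: $\alpha\leq 1-2^{-1/4}$ and $1<((1-\alpha)^3-\Delta(1+\alpha)^3)N_{min}$. *)

(* Defs.v *)
From Stdlib Require Import Reals List.
Open Scope R_scope.

Inductive ev (Node : Type) : Type :=
| EEnter : Node -> ev Node
| EJoin  : Node -> ev Node
| ELeave : Node -> ev Node.
Arguments EEnter {Node} _.
Arguments EJoin {Node} _.
Arguments ELeave {Node} _.

(** Messages of the joining part.  An enter-echo carries the Changes set of
    its sender (the value / is_joined fields play no role here). *)
Inductive msg (Node : Type) : Type :=
| MEnter      : Node -> msg Node
| MEnterEcho  : (ev Node -> Prop) -> msg Node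
| MJoined     : Node -> msg Node
| MJoinedEcho : Node -> msg Node
| MLeave      : Node -> msg Node
| MLeaveEcho  : Node -> msg Node.
Arguments MEnter {Node} _.
Arguments MEnterEcho {Node} _.
Arguments MJoined {Node} _.
Arguments MJoinedEcho {Node} _.
Arguments MLeave {Node} _.
Arguments MLeaveEcho {Node} _.

(** An execution: times of the Enter / join / Leave / Crash events of each
    node ([None] = never happens; at most one of each kind per node),
    broadcasts [bcast p t m] (p broadcasts m at time t), receptions
    [recv q t p m] (q receives at time t the message m broadcast by p), and
    the local variable [changes p t] = Changes_p^t (value at time t, after all
    steps taken at time t). *)
Record exec (Node : Type) : Type := mkExec {
  te : Node -> option R;
  tj : Node -> option R;
  tl : Node -> option R;
  tc : Node -> option R;
  bcast : Node -> R -> msg Node -> Prop;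
  recv : Node -> R -> Node -> msg Node -> Prop;
  changes : Node -> R -> ev Node -> Prop
}.
Arguments te {Node} _ _.
Arguments tj {Node} _ _.
Arguments tl {Node} _ _.
Arguments tc {Node} _ _.
Arguments bcast {Node} _ _ _ _.
Arguments recv {Node} _ _ _ _ _.
Arguments changes {Node} _ _ _ _.

Section Model.
Context {Node : Type} (X : exec Node).

Definition present (t : R) (p : Node) : Prop :=
  (exists a, te X p = Some a /\ a <= t) /\
  (forall b, tl X p = Some b -> t < b).

Definition crashed (t : R) (p : Node) : Prop :=
  exists c, tc X p = Some c /\ c <= t.

Definition active (t : R) (p : Node) : Prop :=
  present t p /\ ~ crashed t p.

Definition active_throughout (p : Node) (t1 t2 : R) : Prop :=
  forall s, t1 <= s <= t2 -> active s p.

Definition S0 (p : Node) : Prop := present 0 p.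

(** p enters or leaves during [t1,t2] (initial presence at time 0 is not an
    Enter event). *)
Definition enters_or_leaves_in (t1 t2 : R) (p : Node) : Prop :=
  (exists a, te X p = Some a /\ 0 < a /\ t1 <= a <= t2) \/
  (exists b, tl X p = Some b /\ t1 <= b <= t2).

Definition SysInfo (t1 t2 : R) (e : ev Node) : Prop :=
  match e with
  | EEnter q => exists s, te X q = Some s /\ t1 <= s <= t2
  | EJoin q  => exists s, tj X q = Some s /\ t1 <= s <= t2
  | ELeave q => exists s, tl X q = Some s /\ t1 <= s <= t2
  end.

End Model.

Definition has_card {A : Type} (P : A -> Prop) (n : nat) : Prop :=
  exists l : list A, NoDup l /\ length l = n /\ forall x, In x l <-> P x.

Definition card_le {A : Type} (P : A -> Prop) (x : R) : Prop :=
  forall l : list A, NoDup l -> (forall y, In y l -> P y) -> INR (length l) <= x.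

Record model_assumptions {Node : Type} (X : exec Node)
    (Nmin : nat) (alpha Delta D : R) : Prop := {
  D_pos : 0 < D;
  te_nonneg : forall p a, te X p = Some a -> 0 <= a;
  tl_after_te : forall p b, tl X p = Some b ->
    exists a, te X p = Some a /\ a < b;
  tc_after_te : forall p c, tc X p = Some c ->
    exists a, te X p = Some a /\ a <= c;
  tj_wf : forall p j, tj X p = Some j ->
    (exists a, te X p = Some a /\ a <= j) /\
    (forall b, tl X p = Some b -> j < b) /\
    (forall c, tc X p = Some c -> j <= c);
  S0_joined : forall p, S0 X p -> tj X p = Some 0;
  delivery : forall p t m q, bcast X p t m -> q <> p ->
    active_throughout X q t (t + D) ->
    exists t', t <= t' <= t + D /\ recv X q t' p m;
  N_min_bound : forall t, 0 <= t ->
    exists n, has_card (present X t) n /\ (Nmin <= n)%nat;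
  churn : forall t n, 0 <= t -> has_card (present X t) n ->
    card_le (enters_or_leaves_in X t (t + D)) (alpha * INR n);
  failures : forall t n, 0 <= t -> has_card (present X t) n ->
    card_le (fun p => present X t p /\ crashed X t p) (Delta * INR n)
}.

Record ccreg_joining {Node : Type} (X : exec Node) : Prop := {
  changes_mono : forall p t1 t2 e, t1 <= t2 ->
    changes X p t1 e -> changes X p t2 e;
  init_S0 : forall p q, S0 X p -> S0 X q ->
    changes X p 0 (EEnter q) /\ changes X p 0 (EJoin q);
  on_Enter : forall p a, te X p = Some a -> 0 < a ->
    changes X p a (EEnter p) /\ bcast X p a (MEnter p);
  on_enter : forall q s w r, recv X q s w (MEnter r) -> active X s q ->
    changes X q s (EEnter r) /\
    exists c : ev Node -> Prop, bcast X q s (MEnterEcho c) /\ c (EEnter r) /\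
      (forall s' e, s' < s -> changes X q s' e -> c e);
  on_enter_echo : forall q s w c, recv X q s w (MEnterEcho c) -> active X s q ->
    forall e, c e -> changes X q s e;
  on_join : forall p j, tj X p = Some j -> 0 < j ->
    changes X p j (EJoin p) /\ bcast X p j (MJoined p);
  on_joined : forall q s w r, recv X q s w (MJoined r) -> active X s q ->
    changes X q s (EJoin r) /\ bcast X q s (MJoinedEcho r);
  on_joined_echo : forall q s w r, recv X q s w (MJoinedEcho r) -> active X s q ->
    changes X q s (EJoin r);
  (* Leave(q): q broadcasts leave, or, if q has crashed, the (forced) leave is
     generated at another active node w, which adds leave(q) and broadcasts *)
  on_Leave : forall q b, tl X q = Some b ->
    exists w, bcast X w b (MLeave q) /\
      ((w = q /\ forall c, tc X q = Some c -> b < c) \/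
       (w <> q /\ crashed X b q /\ active X b w /\ changes X w b (ELeave q)));
  on_leave : forall q s w r, recv X q s w (MLeave r) -> active X s q ->
    changes X q s (ELeave r) /\ bcast X q s (MLeaveEcho r);
  on_leave_echo : forall q s w r, recv X q s w (MLeaveEcho r) -> active X s q ->
    changes X q s (ELeave r)
}.

(* Main.v *)
Require Import Defs.
From Stdlib Require Import Reals List Lra Lia Psatz Classical ClassicalEpsilon.
Open Scope R_scope.

Lemma alpha_quarter (alpha : R) : alpha <= 1 - Rpower 2 (- (1 / 4)) -> alpha <= 1/4.
Proof.
  intros H.
  set (x := Rpower 2 (- (1/4))).
  assert (Hx : 0 < x) by (unfold x, Rpower; apply exp_pos).
  assert (H4 : x ^ 4 = / 2).
  { rewrite <- Rpower_pow by exact Hx. unfold x. rewrite Rpower_mult.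
    replace (- (1/4) * INR 4) with (Ropp 1) by (simpl; lra).
    rewrite Rpower_Ropp, Rpower_1 by lra. reflexivity. }
  assert (x >= 3/4).
  { destruct (Rlt_or_le x (3/4)) as [Hl|Hl]; [|lra].
    exfalso. simpl in H4.
    assert (x*x < 9/16) by nra.
    assert (x*x*(x*x) < 81/256) by nra. nra. }
  fold x in H. lra.
Qed.

Lemma key_ineq (a d : R) : 0 <= a -> a <= 1/4 -> 0 <= d ->
  0 < (1 - a) ^ 3 - d * (1 + a) ^ 3 -> 3 * a + d < 1.
Proof.
  intros Ha Ha4 Hd H.
  destruct (Rlt_or_le (3*a+d) 1) as [|Hc]; [assumption|exfalso].
  assert (Hp : 0 < (1+a)^3) by (apply pow_lt; lra).
  assert (d * (1+a)^3 >= (1 - 3*a) * (1+a)^3) by (apply Rle_ge, Rmult_le_compat_r; lra).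
  assert ((1 - 3*a) * (1+a)^3 - (1-a)^3 = a * (3 - 9*a - 7*a^2 - 3*a^3)) by ring.
  assert (a^2 <= 1/16) by nra.
  assert (a^3 <= 1/64) by (simpl; nra).
  assert (0 <= a * (3 - 9*a - 7*a^2 - 3*a^3)) by (apply Rmult_le_pos; lra).
  lra.
Qed.

Lemma arith (a d x0 x1 x2 y0 y1 y2 z n0 n1 n2 n3 : R) :
  0 <= a -> 0 <= d -> 3*a + d < 1 -> 1 <= n0 ->
  0 <= y0 -> 0 <= y1 -> 0 <= y2 ->
  x0 + y0 <= a * n0 -> n1 <= n0 + y0 ->
  x1 + y1 <= a * n1 -> n2 <= n1 + y1 ->
  x2 + y2 <= a * n2 -> n3 <= n2 + y2 ->
  z <= d * n3 -> n0 = x0 + x1 + x2 + z -> False.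
Proof.
  intros.
  assert (d * n3 <= d * (n2 + y2)) by (apply Rmult_le_compat_l; lra).
  assert (d * y2 <= y2) by nra.
  assert (S1 : z + x2 <= (a + d) * n2) by nra.
  assert ((a+d) * n2 <= (a+d) * (n1 + y1)) by (apply Rmult_le_compat_l; lra).
  assert ((a+d) * y1 <= y1) by nra.
  assert (S2 : z + x2 + x1 <= (2*a + d) * n1) by nra.
  assert ((2*a+d) * n1 <= (2*a+d) * (n0 + y0)) by (apply Rmult_le_compat_l; lra).
  assert ((2*a+d) * y0 <= y0) by nra.
  assert (S3 : z + x2 + x1 + x0 <= (3*a + d) * n0) by nra.
  nra.
Qed.

Definition dec (P : Prop) : bool := if excluded_middle_informative P then true else false.
Lemma decT (P : Prop) : dec P = true <-> P.
Proof. unfold dec; destruct (excluded_middle_informative P); split; intros; try tauto; discriminate. Qed.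
Lemma decF (P : Prop) : negb (dec P) = true <-> ~ P.
Proof. unfold dec; destruct (excluded_middle_informative P); simpl; split; intros; try tauto; discriminate. Qed.

Lemma filter_split {A} (f : A -> bool) l :
  length l = (length (filter f l) + length (filter (fun x => negb (f x)) l))%nat.
Proof. induction l as [|a l IH]; simpl; auto. destruct (f a); simpl; lia. Qed.

Lemma card_bound {A} (P : A -> Prop) n l : has_card P n -> NoDup l ->
  (forall x, In x l -> P x) -> (length l <= n)%nat.
Proof.
  intros [l' [Hnd [Hlen Hin]]] Hl Hs. rewrite <- Hlen.
  apply NoDup_incl_length; auto. intros x Hx. apply Hin. auto.
Qed.

Section S.
Context {Node : Type} (X : exec Node) (Nmin : nat) (alpha Delta D : R).

Lemma present_step (HM : model_assumptions X Nmin alpha Delta D) t q :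
  present X t q -> ~ enters_or_leaves_in X t (t + D) q -> present X (t + D) q.
Proof.
  pose proof (D_pos _ _ _ _ _ HM).
  intros [[a [Ha Hat]] Hl] Hn. split.
  - exists a; split; auto; lra.
  - intros b Hb. specialize (Hl b Hb).
    destruct (Rlt_or_le (t + D) b) as [|Hle]; auto.
    exfalso; apply Hn; right; exists b; split; auto; lra.
Qed.

Lemma new_entrant (HM : model_assumptions X Nmin alpha Delta D) t q : 0 <= t ->
  present X (t + D) q -> ~ present X t q -> enters_or_leaves_in X t (t + D) q.
Proof.
  pose proof (D_pos _ _ _ _ _ HM).
  intros Ht [[a [Ha Hat]] Hl] Hn.
  destruct (Rle_or_lt a t) as [Hle|Hlt].
  - exfalso; apply Hn; split.
    + exists a; auto.
    + intros b Hb; specialize (Hl b Hb); lra.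
  - left; exists a; repeat split; auto; lra.
Qed.

Lemma window (HM : model_assumptions X Nmin alpha Delta D) t n n' l' :
  0 <= t -> has_card (present X t) n ->
  NoDup l' -> length l' = n' -> (forall x, In x l' <-> present X (t + D) x) ->
  forall Xl, NoDup Xl -> (forall q, In q Xl -> present X t q /\ enters_or_leaves_in X t (t + D) q) ->
  exists y, INR (length Xl) + y <= alpha * INR n /\ INR n' <= INR n + y /\ 0 <= y.
Proof.
  intros Ht Hc Hnd' Hlen' Hin' Xl HndX HX.
  set (Y := filter (fun q => negb (dec (present X t q))) l').
  exists (INR (length Y)). split; [|split].
  - rewrite <- plus_INR, <- length_app.
    apply (churn _ _ _ _ _ HM t n Ht Hc).
    + apply NoDup_app; auto.
      * apply NoDup_filter; auto.
      * intros a Ha Hb. unfold Y in Hb. apply filter_In in Hb as [_ Hb].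
        apply (proj1 (decF _)) in Hb. apply Hb. apply HX; auto.
    + intros y Hy. apply in_app_or in Hy as [Hy|Hy].
      * apply HX; auto.
      * unfold Y in Hy. apply filter_In in Hy as [Hy1 Hy2]. apply (proj1 (decF _)) in Hy2.
        apply new_entrant; auto. apply Hin'; auto.
  - rewrite <- Hlen'. rewrite (filter_split (fun q => dec (present X t q)) l').
    rewrite plus_INR. apply Rplus_le_compat_r. apply le_INR.
    apply (card_bound _ _ _ Hc). apply NoDup_filter; auto.
    intros x Hx. apply filter_In in Hx as [_ Hx]. apply decT; auto.
  - apply pos_INR.
Qed.

Lemma survivor (HM : model_assumptions X Nmin alpha Delta D) :
  (1 <= Nmin)%nat -> 0 <= alpha -> 0 <= Delta -> 3 * alpha + Delta < 1 ->
  forall t0, 0 <= t0 -> exists q, present X t0 q /\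
    ~ enters_or_leaves_in X t0 (t0 + D) q /\
    ~ enters_or_leaves_in X (t0 + D) (t0 + D + D) q /\
    ~ enters_or_leaves_in X (t0 + D + D) (t0 + D + D + D) q /\
    ~ crashed X (t0 + D + D + D) q.
Proof.
  intros HN Ha Hd Hk t0 Ht0.
  pose proof (D_pos _ _ _ _ _ HM) as HD.
  set (t1 := t0 + D). set (t2 := t1 + D). set (t3 := t2 + D).
  destruct (N_min_bound _ _ _ _ _ HM t0 Ht0) as [n0 [Hc0 Hn0]].
  destruct (N_min_bound _ _ _ _ _ HM t1 ltac:(unfold t1; lra)) as [n1 [Hc1 _]].
  destruct (N_min_bound _ _ _ _ _ HM t2 ltac:(unfold t2, t1; lra)) as [n2 [Hc2 _]].
  destruct (N_min_bound _ _ _ _ _ HM t3 ltac:(unfold t3, t2, t1; lra)) as [n3 [Hc3 _]].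
  pose proof Hc0 as [l0 [Hnd0 [Hl0 Hi0]]].
  pose proof Hc1 as [l1 [Hnd1 [Hl1 Hi1]]].
  pose proof Hc2 as [l2 [Hnd2 [Hl2 Hi2]]].
  pose proof Hc3 as [l3 [Hnd3 [Hl3 Hi3]]].
  set (C0 := enters_or_leaves_in X t0 t1).
  set (C1 := enters_or_leaves_in X t1 t2).
  set (C2 := enters_or_leaves_in X t2 t3).
  set (X0 := filter (fun q => dec (C0 q)) l0).
  set (L1 := filter (fun q => negb (dec (C0 q))) l0).
  set (X1 := filter (fun q => dec (C1 q)) L1).
  set (L2 := filter (fun q => negb (dec (C1 q))) L1).
  set (X2 := filter (fun q => dec (C2 q)) L2).
  set (L3 := filter (fun q => negb (dec (C2 q))) L2).
  assert (HL1 : forall q, In q L1 -> present X t1 q /\ present X t0 q /\ ~ C0 q).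
  { intros q Hq. unfold L1 in Hq. apply filter_In in Hq as [Hq1 Hq2]. apply (proj1 (decF _)) in Hq2.
    apply Hi0 in Hq1. split; auto. apply present_step; auto. }
  assert (HL2 : forall q, In q L2 -> present X t2 q /\ present X t0 q /\ ~ C0 q /\ ~ C1 q).
  { intros q Hq. unfold L2 in Hq. apply filter_In in Hq as [Hq1 Hq2]. apply (proj1 (decF _)) in Hq2.
    apply HL1 in Hq1 as [? [? ?]]. split; [apply present_step; auto|tauto]. }
  assert (HL3 : forall q, In q L3 -> present X t3 q /\ present X t0 q /\ ~ C0 q /\ ~ C1 q /\ ~ C2 q).
  { intros q Hq. unfold L3 in Hq. apply filter_In in Hq as [Hq1 Hq2]. apply (proj1 (decF _)) in Hq2.
    apply HL2 in Hq1 as [? [? [? ?]]]. split; [apply present_step; auto|tauto]. }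
  destruct (classic (exists q, In q L3 /\ ~ crashed X t3 q)) as [[q [Hq Hnc]]|Hall].
  { exists q. apply HL3 in Hq as [? [? [? [? ?]]]]. tauto. }
  exfalso.
  assert (NL1 : NoDup L1) by (apply NoDup_filter; auto).
  assert (NL2 : NoDup L2) by (apply NoDup_filter; auto).
  assert (NL3 : NoDup L3) by (apply NoDup_filter; auto).
  assert (ND0 : NoDup X0) by (apply NoDup_filter; auto).
  assert (HX0 : forall q, In q X0 -> present X t0 q /\ enters_or_leaves_in X t0 (t0 + D) q).
  { intros q Hq. unfold X0 in Hq. apply filter_In in Hq as [Hq1 Hq2]. apply (proj1 (decT _)) in Hq2.
    split; [apply Hi0; auto | exact Hq2]. }
  destruct (window HM t0 n0 n1 l1 Ht0 Hc0 Hnd1 Hl1 Hi1 X0 ND0 HX0) as [y0 [W0 [V0 P0]]].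
  assert (ND1 : NoDup X1) by (apply NoDup_filter; auto).
  assert (HX1 : forall q, In q X1 -> present X t1 q /\ enters_or_leaves_in X t1 (t1 + D) q).
  { intros q Hq. unfold X1 in Hq. apply filter_In in Hq as [Hq1 Hq2]. apply (proj1 (decT _)) in Hq2.
    split; [apply HL1; auto | exact Hq2]. }
  destruct (window HM t1 n1 n2 l2 ltac:(unfold t1; lra) Hc1 Hnd2 Hl2 Hi2 X1 ND1 HX1) as [y1 [W1 [V1 P1]]].
  assert (ND2 : NoDup X2) by (apply NoDup_filter; auto).
  assert (HX2 : forall q, In q X2 -> present X t2 q /\ enters_or_leaves_in X t2 (t2 + D) q).
  { intros q Hq. unfold X2 in Hq. apply filter_In in Hq as [Hq1 Hq2]. apply (proj1 (decT _)) in Hq2.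
    split; [apply HL2; auto | exact Hq2]. }
  destruct (window HM t2 n2 n3 l3 ltac:(unfold t2, t1; lra) Hc2 Hnd3 Hl3 Hi3 X2 ND2 HX2) as [y2 [W2 [V2 P2]]].
  assert (Z : INR (length L3) <= Delta * INR n3).
  { apply (failures _ _ _ _ _ HM t3 n3 ltac:(unfold t3, t2, t1; lra) Hc3); auto.
    intros q Hq. split. apply HL3; auto.
    destruct (classic (crashed X t3 q)); auto. exfalso; apply Hall; exists q; auto. }
  assert (E : length l0 = (length X0 + length X1 + length X2 + length L3)%nat).
  { rewrite (filter_split (fun q => dec (C0 q)) l0).
    fold X0 L1. rewrite (filter_split (fun q => dec (C1 q)) L1). fold X1 L2.
    rewrite (filter_split (fun q => dec (C2 q)) L2). fold X2 L3. lia. }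
  rewrite Hl0 in E.
  apply (arith alpha Delta (INR (length X0)) (INR (length X1)) (INR (length X2))
     y0 y1 y2 (INR (length L3)) (INR n0) (INR n1) (INR n2) (INR n3)); auto.
  - apply (le_INR 1); lia.
  - rewrite E. rewrite !plus_INR. ring.
Qed.

End S.

Definition evtime {Node} (X : exec Node) (e : ev Node) (s : R) : Prop :=
  match e with
  | EEnter r => te X r = Some s
  | EJoin r => tj X r = Some s
  | ELeave r => Defs.tl X r = Some s
  end.

Definition carries {Node} (e : ev Node) (m : msg Node) : Prop :=
  match e with
  | EEnter r => m = MEnter r \/ exists c, m = MEnterEcho c /\ c (EEnter r)
  | EJoin r => m = MJoined r \/ m = MJoinedEcho r
  | ELeave r => m = MLeave r \/ m = MLeaveEcho r
  end.

Section S2.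
Context {Node : Type} (X : exec Node) (Nmin : nat) (alpha Delta D : R).

Lemma SysInfo_evtime t1 t2 e : SysInfo X t1 t2 e -> exists s, evtime X e s /\ t1 <= s <= t2.
Proof. destruct e; simpl; intros [s [H1 H2]]; exists s; auto. Qed.

Lemma active_mono T q a s : active X T q -> te X q = Some a -> a <= s -> s <= T -> active X s q.
Proof.
  intros [[_ Hl] Hc] Ha H1 H2. split; [split|].
  - exists a; auto.
  - intros b Hb; specialize (Hl b Hb); lra.
  - intros [c [Hc1 Hc2]]. apply Hc. exists c; split; auto; lra.
Qed.

Lemma active_thr T q a s1 s2 : active X T q -> te X q = Some a -> a <= s1 -> s2 <= T ->
  active_throughout X q s1 s2.
Proof. intros H Ha H1 H2 s Hs. apply (active_mono T q a); auto; lra. Qed.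

Lemma carries_recv (HC : ccreg_joining X) x s w m e :
  recv X x s w m -> active X s x -> carries e m -> changes X x s e.
Proof.
  intros Hr Ha Hc. destruct e as [r|r|r]; simpl in Hc.
  - destruct Hc as [->|[c [-> Hc]]].
    + apply (on_enter X HC x s w r Hr Ha).
    + apply (on_enter_echo X HC x s w c Hr Ha); auto.
  - destruct Hc as [->| ->].
    + apply (on_joined X HC x s w r Hr Ha).
    + apply (on_joined_echo X HC x s w r Hr Ha).
  - destruct Hc as [->| ->].
    + apply (on_leave X HC x s w r Hr Ha).
    + apply (on_leave_echo X HC x s w r Hr Ha).
Qed.

Lemma deliver_carry (HM : model_assumptions X Nmin alpha Delta D) (HC : ccreg_joining X) w u m x e :
  bcast X w u m -> x <> w -> active_throughout X x u (u + D) -> carries e m ->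
  exists t', u <= t' <= u + D /\ changes X x t' e.
Proof.
  intros Hb Hne Hat Hc.
  destruct (delivery _ _ _ _ _ HM w u m x Hb Hne Hat) as [t' [Ht' Hr]].
  exists t'; split; auto. apply (carries_recv HC x t' w m); auto.
Qed.

Lemma direct (HM : model_assumptions X Nmin alpha Delta D) (HC : ccreg_joining X) e s x :
  evtime X e s -> 0 < s -> active_throughout X x s (s + D) ->
  exists t', s <= t' <= s + D /\ changes X x t' e /\
    (t' = s \/ exists m, bcast X x t' m /\ carries e m).
Proof.
  pose proof (D_pos _ _ _ _ _ HM) as HD.
  intros He Hs Hat. destruct e as [r|r|r]; simpl in He.
  - destruct (on_Enter X HC r s He Hs) as [Hch Hb].
    destruct (classic (x = r)) as [->|Hne].
    + exists s; repeat split; auto; lra.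
    + destruct (delivery _ _ _ _ _ HM r s _ x Hb Hne Hat) as [t' [Ht' Hr]].
      destruct (on_enter X HC x t' r r Hr (Hat t' Ht')) as [Hc1 [c [Hc2 [Hc3 _]]]].
      exists t'; repeat split; try tauto. right; exists (MEnterEcho c); split; auto.
      simpl; right; exists c; auto.
  - destruct (on_join X HC r s He Hs) as [Hch Hb].
    destruct (classic (x = r)) as [->|Hne].
    + exists s; repeat split; auto; lra.
    + destruct (delivery _ _ _ _ _ HM r s _ x Hb Hne Hat) as [t' [Ht' Hr]].
      destruct (on_joined X HC x t' r r Hr (Hat t' Ht')) as [Hc1 Hc2].
      exists t'; repeat split; try tauto. right; exists (MJoinedEcho r); split; auto.
      simpl; auto.
  - destruct (on_Leave X HC r s He) as [w [Hb Hbr]].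
    destruct (classic (x = w)) as [->|Hne].
    + destruct Hbr as [[-> _]|[_ [_ [_ Hch]]]].
      * exfalso. destruct (Hat s ltac:(lra)) as [[_ Hl] _]. specialize (Hl s He). lra.
      * exists s; repeat split; auto; lra.
    + destruct (delivery _ _ _ _ _ HM w s _ x Hb Hne Hat) as [t' [Ht' Hr]].
      destruct (on_leave X HC x t' w r Hr (Hat t' Ht')) as [Hc1 Hc2].
      exists t'; repeat split; try tauto. right; exists (MLeaveEcho r); split; auto.
      simpl; auto.
Qed.

Lemma S0_of (HM : model_assumptions X Nmin alpha Delta D) r : te X r = Some 0 -> S0 X r.
Proof.
  intros H. split.
  - exists 0; split; auto; lra.
  - intros b Hb. destruct (tl_after_te _ _ _ _ _ HM r b Hb) as [a [Ha Hab]].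
    rewrite H in Ha; injection Ha; intros; subst; lra.
Qed.

Lemma time0 (HM : model_assumptions X Nmin alpha Delta D) (HC : ccreg_joining X) e p :
  evtime X e 0 -> S0 X p -> changes X p 0 e.
Proof.
  intros He Hp. destruct e as [r|r|r]; simpl in He.
  - apply (init_S0 X HC p r Hp (S0_of HM r He)).
  - destruct (tj_wf _ _ _ _ _ HM r 0 He) as [[a [Ha Ha0]] _].
    pose proof (te_nonneg _ _ _ _ _ HM r a Ha).
    assert (a = 0) by lra; subst.
    apply (init_S0 X HC p r Hp (S0_of HM r Ha)).
  - destruct (tl_after_te _ _ _ _ _ HM r 0 He) as [a [Ha Hab]].
    pose proof (te_nonneg _ _ _ _ _ HM r a Ha). lra.
Qed.

Lemma helper_exists (HM : model_assumptions X Nmin alpha Delta D) :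
  (1 <= Nmin)%nat -> 0 <= alpha -> 0 <= Delta -> 3 * alpha + Delta < 1 ->
  forall p tpe, te X p = Some tpe -> 0 < tpe ->
  exists q aq, q <> p /\ te X q = Some aq /\ (aq = 0 \/ (0 < aq /\ aq + 2 * D < tpe)) /\
    aq < tpe /\ active X (tpe + D) q.
Proof.
  intros HN Ha Hd Hk p tpe Hp Htpe.
  pose proof (D_pos _ _ _ _ _ HM) as HD.
  set (t0 := Rmax 0 (tpe - 2 * D)).
  assert (T0 : 0 <= t0 /\ tpe - 2 * D <= t0 /\ t0 < tpe /\ (0 < t0 -> t0 = tpe - 2 * D)).
  { unfold t0, Rmax; destruct (Rle_dec 0 (tpe - 2 * D)); repeat split; lra. }
  destruct T0 as [T1 [T2 [T3 T4]]].
  destruct (survivor X Nmin alpha Delta D HM HN Ha Hd Hk t0 T1) as [q [Hq0 [N0 [N1 [N2 Nc]]]]].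
  assert (Hq3 : present X (t0 + D + D + D) q) .
  { apply (present_step X Nmin alpha Delta D HM); auto.
    apply (present_step X Nmin alpha Delta D HM); auto.
    apply (present_step X Nmin alpha Delta D HM); auto. }
  destruct Hq0 as [[aq [Haq Haq0]] Hlq].
  assert (Hact : active X (t0 + D + D + D) q) by (split; auto).
  assert (Hc : aq = 0 \/ (0 < aq /\ aq < t0)).
  { pose proof (te_nonneg _ _ _ _ _ HM q aq Haq).
    destruct (Rle_or_lt aq 0); [left; lra|right].
    split; auto. destruct (Rlt_or_le aq t0); auto.
    exfalso; apply N0; left; exists aq; repeat split; auto; lra. }
  exists q, aq. split; [|split; [exact Haq|split; [|split]]].
  - intros ->. rewrite Hp in Haq. injection Haq; intros; lra.
  - destruct Hc as [|[H1 H2]]; [left; auto|right]. split; auto. assert (0 < t0) by lra. specialize (T4 H). lra.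
  - lra.
  - apply (active_mono (t0 + D + D + D) q aq); auto; lra.
Qed.

Lemma main_ind (HM : model_assumptions X Nmin alpha Delta D) (HC : ccreg_joining X) :
  (1 <= Nmin)%nat -> 0 <= alpha -> 0 <= Delta -> 3 * alpha + Delta < 1 ->
  forall n : nat, forall p t tpe, t <= INR n * D -> te X p = Some tpe -> active X t p ->
    tpe + 2 * D <= t -> forall e, SysInfo X 0 (t - D) e -> changes X p t e.
Proof.
  intros HN Ha Hd Hk.
  pose proof (D_pos _ _ _ _ _ HM) as HD.
  induction n as [|n IH]; intros p t tpe Htn Hp Hact Ht e He.
  { pose proof (te_nonneg _ _ _ _ _ HM p tpe Hp). simpl in Htn. lra. }
  rewrite S_INR in Htn.
  pose proof (te_nonneg _ _ _ _ _ HM p tpe Hp) as Htpe0.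
  destruct (SysInfo_evtime _ _ _ He) as [s [Hs [Hs0 Hst]]].
  assert (Hpthr : forall s1 s2, tpe <= s1 -> s2 <= t -> active_throughout X p s1 s2).
  { intros; apply (active_thr t p tpe); auto. }
  assert (Mono : forall t' e', t' <= t -> changes X p t' e' -> changes X p t e').
  { intros; eapply changes_mono; eauto. }
  assert (Direct : tpe <= s -> 0 < s -> changes X p t e).
  { intros H1 H2. destruct (direct HM HC e s p Hs H2 (Hpthr s (s + D) H1 ltac:(lra)))
      as [t' [Ht' [Hch _]]]. apply (Mono t'); auto; lra. }
  destruct (Rle_or_lt tpe 0) as [Htpe|Htpe].
  {
    assert (tpe = 0) by lra; subst tpe.
    destruct (Rle_or_lt s 0) as [Hs1|Hs1].
    - assert (s = 0) by lra; subst s.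
      apply (Mono 0); [lra|]. apply (time0 HM HC); auto. apply S0_of; auto.
    - apply Direct; lra. }
  destruct (Rle_or_lt tpe s) as [Hs2|Hs2].
  { apply Direct; lra. }
  destruct (helper_exists HM HN Ha Hd Hk p tpe Hp Htpe) as [q [aq [Hqp [Haq [Hcase [Haqt Hqact]]]]]].
  destruct (on_Enter X HC p tpe Hp Htpe) as [_ Hbp].
  destruct (delivery _ _ _ _ _ HM p tpe _ q Hbp Hqp
     (active_thr (tpe + D) q aq tpe (tpe + D) Hqact Haq ltac:(lra) ltac:(lra))) as [sq [Hsq Hrq]].
  assert (Hqsq : active X sq q) by (apply (active_mono (tpe + D) q aq); auto; lra).
  destruct (on_enter X HC q sq p p Hrq Hqsq) as [_ [c [Hbc [_ Hcc]]]].
  assert (Hpq : p <> q) by auto.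
  destruct (delivery _ _ _ _ _ HM q sq _ p Hbc Hpq (Hpthr sq (sq + D) ltac:(lra) ltac:(lra)))
    as [u [Hu Hru]].
  assert (EchoOK : forall s', s' < sq -> changes X q s' e -> changes X p t e).
  { intros s' Hs' Hch. apply (Mono u); [lra|].
    apply (on_enter_echo X HC p u q c Hru (Hpthr u u ltac:(lra) ltac:(lra) u ltac:(lra))).
    apply (Hcc s'); auto. }
  assert (BcastOK : forall u' m, tpe <= u' -> u' + D <= t -> bcast X q u' m -> carries e m ->
     changes X p t e).
  { intros u' m H1 H2 Hb Hcar.
    destruct (deliver_carry HM HC q u' m p e Hb Hpq (Hpthr u' (u' + D) H1 H2) Hcar) as [t' [Ht' Hch]].
    apply (Mono t'); auto; lra. }
  destruct (Rlt_or_le s aq) as [Hsa|Hsa].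
  -
    destruct Hcase as [Haq0|[Haq0 Haq2]]; [lra|].
    set (tau := Rmax (s + D) (aq + 2 * D)).
    assert (Tau : s + D <= tau /\ aq + 2 * D <= tau /\ tau < tpe).
    { unfold tau, Rmax; destruct (Rle_dec (s + D) (aq + 2 * D)); repeat split; lra. }
    destruct Tau as [Ta1 [Ta2 Ta3]].
    apply (EchoOK tau); [lra|].
    apply (IH q tau aq); auto.
    + lra.
    + apply (active_mono (tpe + D) q aq); auto; lra.
    + destruct e as [r|r|r]; simpl in Hs |- *; exists s; repeat split; auto; lra.
  - destruct (Rle_or_lt s 0) as [Hs1|Hs1].
    + assert (s = 0) by lra; subst s.
      assert (aq = 0) by (destruct Hcase as [|[? ?]]; lra); subst aq.
      apply (EchoOK 0); [lra|]. apply (time0 HM HC); auto. apply S0_of; auto.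
    + destruct (direct HM HC e s q Hs Hs1
         (active_thr (tpe + D) q aq s (s + D) Hqact Haq Hsa ltac:(lra))) as [t' [Ht' [Hch Hor]]].
      destruct (Rlt_or_le t' sq) as [Hl|Hl].
      * apply (EchoOK t'); auto.
      * destruct Hor as [Heq|[m [Hbm Hcm]]]; [lra|].
        apply (BcastOK t' m); auto; lra.
Qed.

End S2.

Theorem lemma5 (Node : Type) (X : exec Node) (Nmin : nat) (alpha Delta D : R) :
  alpha < 1 -> Delta < 1 ->
  alpha <= 1 - Rpower 2 (- (1 / 4)) ->
  1 < ((1 - alpha) ^ 3 - Delta * (1 + alpha) ^ 3) * INR Nmin ->
  model_assumptions X Nmin alpha Delta D ->
  ccreg_joining X ->
  forall (p : Node) (t tpe : R),
    te X p = Some tpe -> active X t p -> tpe + 2 * D <= t ->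
    forall e, SysInfo X 0 (t - D) e -> changes X p t e.
Proof.
  intros Ha1 Hd1 Hapow Hhyp HM HC p t tpe Hp Hact Ht e He.
  pose proof (D_pos _ _ _ _ _ HM) as HD.
  assert (HN : (1 <= Nmin)%nat).
  { destruct Nmin; [simpl in Hhyp; lra | lia]. }
  assert (HNr : 1 <= INR Nmin) by (apply (le_INR 1); lia).
  destruct (N_min_bound _ _ _ _ _ HM 0 ltac:(lra)) as [n [Hc Hn]].
  assert (Hnr : 1 <= INR n) by (apply (le_INR 1); lia).
  assert (Ha : 0 <= alpha).
  { pose proof (churn _ _ _ _ _ HM 0 n ltac:(lra) Hc nil (NoDup_nil _) ltac:(intros y [])) as H.
    simpl in H. nra. }
  assert (Hd : 0 <= Delta).
  { pose proof (failures _ _ _ _ _ HM 0 n ltac:(lra) Hc nil (NoDup_nil _) ltac:(intros y [])) as H.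
    simpl in H. nra. }
  assert (Hk : 3 * alpha + Delta < 1).
  { apply key_ineq; auto.
    - apply alpha_quarter; auto.
    - nra. }
  destruct (INR_unbounded (t / D)) as [n0 Hn0].
  apply (main_ind X Nmin alpha Delta D HM HC HN Ha Hd Hk n0 p t tpe); auto.
  apply Rmult_gt_compat_r with (r := D) in Hn0; auto.
  unfold Rdiv in Hn0. rewrite Rmult_assoc, Rinv_l, Rmult_1_r in Hn0 by lra. lra.
Qed.
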